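(* Let $\varphi=(\mathfrak f_1,\dots,\mathfrak f_r)$ be a flag with $r>1$ and $\mathfrak g\notin\varphi$, and fix either version $B=X$ or $B=D$. Then the butterfly $B[\varphi]$ is the join of $B[\mathfrak f_1]$ and the simplex $/(\mathfrak f_2,\dots,\mathfrak f_r)/$: two closed segments joining a point of $B[\mathfrak f_1]$ to a point of $/(\mathfrak f_2,\dots,\mathfrak f_r)/$ can intersect only at their endpoints, so that the map $(x,\kappa,y)\mapsto(1-\kappa)x+\kappa y$ from the topological join $/(\mathfrak f_2,\dots,\mathfrak f_r)/ * B[\mathfrak f_1]$ onto $B[\varphi]$ is a homeomorphism.
   Context: $\mathfrak g$ is the Lie algebra of a compact Lie group with Euclidean inner product $Q$ satisfying $Q([X,Y],Z)=Q(X,[Y,Z])$; linear operators are symmetric if $Q(AX,Y)=Q(X,AY)$. For symmetric $A$ and $a\in\mathbb R$, $F_a$ is the span of eigenvectors with eigenvalue $\le a$; $A$ is filtering if $[F_a,F_b]\subseteq F_{a+b}$ for all $a,b$; $\mathfrak F_+$ is the set of filtering symmetric operators with nonnegative spectrum and trace $1$. $\mathfrak h\subsetneq\mathfrak g$ is a fixed subalgebra, $\mathcal A$ a compact group of automorphisms of $\mathfrak g$ preserving $\mathfrak h$ and $Q$. For an $\mathcal A$-invariant subalgebra $\mathfrak k$ with $\mathfrak h\subsetneq\mathfrak k\subsetneq\mathfrak g$: $\bar\chi^{\mathfrak k}=\frac{1}{\dim(\mathfrak g/\mathfrak k)}(1_{\mathfrak g}-1_{\mathfrak k})$; $D[\mathfrak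 k]$ is the set of symmetric operators with nonnegative spectrum and trace $1$ commuting with all elements of $\mathcal A$, annihilating $\mathfrak k$ and commuting with $\mathrm{ad}(X)$, $X\in\mathfrak k$; $X[\mathfrak k]=D[\mathfrak k]\cap\mathfrak F_+$. A flag is a sequence $\varphi=(\mathfrak f_1,\dots,\mathfrak f_r)$, $r\ge1$, of $\mathcal A$-invariant subalgebras with $\mathfrak g\supseteq\mathfrak f_1\supsetneq\dots\supsetneq\mathfrak f_r\supsetneq\mathfrak h$; for a flag not containing $\mathfrak g$, $/\varphi/$ is the convex hull of $\{\bar\chi^{\mathfrak f_i}\}$. Butterflies ($B=X$ or $B=D$): if $r>1$ and $\mathfrak f_1\ne\mathfrak g$, $B[\varphi]$ is the union of all closed segments joining a point of $B[\mathfrak f_1]$ to a point of $/(\mathfrak f_2,\dots,\mathfrak f_r)/$. *)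

(* Defs.v *)
From HB Require Import structures.
From mathcomp Require Import all_boot all_order all_algebra.
From mathcomp Require Import all_classical all_reals all_analysis.
Set Implicit Arguments. Unset Strict Implicit. Unset Printing Implicit Defensive.
Import Order.TTheory GRing.Theory Num.Theory.
Import numFieldNormedType.Exports.
Local Open Scope ring_scope.
Local Open Scope classical_set_scope.

(* The Lie algebra g is modelled as R^n, i.e. row vectors 'rV[R]_n; linear
   operators are n x n matrices acting on the right (x |-> x *m M).
   Subspaces (subalgebras) are represented by matrices through their row
   space (mxalgebra, scope %MS); g itself is 1%:M. *)

Section Defs.
Variables (R : realType) (n : nat).
Local Notation vec := 'rV[R]_n.
Local Notation op := 'M[R]_n.

Definition qform (Q : op) (x y : vec) : R := (x *m Q *m y^T) 0 0.

Definition is_inner (Q : op) : Prop :=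
  Q^T = Q /\ forall x : vec, x != 0 -> 0 < qform Q x x.

Definition lie_bracket (br : vec -> vec -> vec) : Prop :=
  [/\ forall (a : R) x y z, br (a *: x + y) z = a *: br x z + br y z,
      forall x y, br x y = - br y x
    & forall x y z, br x (br y z) + br y (br z x) + br z (br x y) = 0].

Definition ad_invariant (Q : op) (br : vec -> vec -> vec) : Prop :=
  forall x y z, qform Q (br x y) z = qform Q x (br y z).

Definition subalgebra (br : vec -> vec -> vec) (S : op) : Prop :=
  forall x y : vec, (x <= S)%MS -> (y <= S)%MS -> (br x y <= S)%MS.

Definition aut_group (Q : op) (br : vec -> vec -> vec) (h : op) (A : set op)
  : Prop :=
  A 1%:M /\
  (forall a b, A a -> A b -> A (a *m b)) /\
  (forall a, A a -> a \in unitmx /\ A (invmx a)) /\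
  (forall a, A a -> forall x y, br (x *m a) (y *m a) = br x y *m a) /\
  (forall a, A a -> forall x y, qform Q (x *m a) (y *m a) = qform Q x y) /\
  (forall a, A a -> (h *m a <= h)%MS) /\
  compact A.

Definition A_invariant (A : set op) (S : op) : Prop :=
  forall a, A a -> (S *m a <= S)%MS.

Definition symmetric_op (Q : op) (M : op) : Prop :=
  forall x y, qform Q (x *m M) y = qform Q x (y *m M).

Definition nonneg_spectrum (M : op) : Prop :=
  forall (l : R) (v : vec), v != 0 -> v *m M = l *: v -> 0 <= l.

Definition in_F (M : op) (a : R) (x : vec) : Prop :=
  exists (m : nat) (c : 'I_m -> R) (v : 'I_m -> vec) (l : 'I_m -> R),
    (forall i, [/\ v i != 0, v i *m M = l i *: v i & l i <= a]) /\
    x = \sum_(i < m) c i *: v i.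

Definition filtering (br : vec -> vec -> vec) (M : op) : Prop :=
  forall a b x y, in_F M a x -> in_F M b y -> in_F M (a + b) (br x y).

Definition Fplus (Q : op) (br : vec -> vec -> vec) (M : op) : Prop :=
  [/\ symmetric_op Q M, nonneg_spectrum M, \tr M = 1 & filtering br M].

Definition Dset (Q : op) (br : vec -> vec -> vec) (A : set op) (k : op)
  (M : op) : Prop :=
  symmetric_op Q M /\ nonneg_spectrum M /\ \tr M = 1 /\
  (forall a, A a -> a *m M = M *m a) /\
  (forall x : vec, (x <= k)%MS -> x *m M = 0) /\
  (forall X : vec, (X <= k)%MS -> forall Y, br X (Y *m M) = br X Y *m M).

Definition Xset (Q : op) (br : vec -> vec -> vec) (A : set op) (k : op)
  (M : op) : Prop := Dset Q br A k M /\ Fplus Q br M.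

Definition Bset (isX : bool) (Q : op) (br : vec -> vec -> vec) (A : set op)
  (k : op) : set op :=
  fun M => if isX then Xset Q br A k M else Dset Q br A k M.

(* 1_k : the Q-orthogonal projection onto k (identity on k, zero on its
   Q-orthogonal complement). *)
Definition proj (Q : op) (S : op) : op :=
  Q *m (row_base S)^T *m invmx (row_base S *m Q *m (row_base S)^T)
    *m row_base S.

Definition chibar (Q : op) (k : op) : op :=
  ((n - \rank k)%:R)^-1 *: (1%:M - proj Q k).

(* Flags are indexed 1..r : f 1 = f_1, ..., f r = f_r. *)
Definition is_flag (br : vec -> vec -> vec) (h : op) (A : set op) (r : nat)
  (f : nat -> op) : Prop :=
  (1 <= r)%N /\
  (forall i, (1 <= i <= r)%N ->
     [/\ subalgebra br (f i), A_invariant A (f i) & (h < f i)%MS]) /\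
  (forall i j, (1 <= i)%N -> (i < j)%N -> (j <= r)%N -> (f j < f i)%MS).

Definition g_not_in_flag (r : nat) (f : nat -> op) : Prop :=
  forall i, (1 <= i <= r)%N -> (f i < 1%:M)%MS.

Definition tail_simplex (Q : op) (r : nat) (f : nat -> op) : set op :=
  fun z => exists t : nat -> R,
    [/\ forall i, 0 <= t i,
        \sum_(2 <= i < r.+1) t i = 1
      & z = \sum_(2 <= i < r.+1) t i *: chibar Q (f i)].

Definition butterfly (isX : bool) (Q : op) (br : vec -> vec -> vec)
  (A : set op) (r : nat) (f : nat -> op) : set op :=
  fun z => exists x y k, [/\ Bset isX Q br A (f 1%N) x,
    tail_simplex Q r f y, 0 <= k <= 1 & z = (1 - k) *: x + k *: y].

End Defs.

(* Main.v *)
Require Import Defs.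
From HB Require Import structures.
From mathcomp Require Import all_boot all_order all_algebra.
From mathcomp Require Import all_classical all_reals all_analysis.
Import Order.TTheory GRing.Theory Num.Theory.
Import numFieldNormedType.Exports.
Local Open Scope ring_scope.
Local Open Scope classical_set_scope.
Set Implicit Arguments. Unset Strict Implicit.

Section ProjFacts.
Variables (R : realType) (n : nat) (Q : 'M[R]_n).
Hypothesis HQ : is_inner Q.

Lemma gram_unit (S : 'M[R]_n) :
  row_base S *m Q *m (row_base S)^T \in unitmx.
Proof.
rewrite -row_free_unit; apply: inj_row_free => v Hv.
have Hq : qform Q (v *m row_base S) (v *m row_base S) = 0.
  rewrite /qform trmx_mul.
  have -> : v *m row_base S *m Q *m ((row_base S)^T *m v^T) =
    v *m (row_base S *m Q *m (row_base S)^T) *m v^T by rewrite !mulmxA.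
  by rewrite Hv mul0mx mxE.
apply/eqP; rewrite -(mulmx_free_eq0 _ (row_base_free S)); apply/eqP.
apply/eqP; apply: contraT => Hne.
by have := HQ.2 _ Hne; rewrite Hq ltxx.
Qed.

Lemma proj_sub (S : 'M[R]_n) : (Defs.proj Q S <= S)%MS.
Proof. by rewrite /Defs.proj; apply: submx_trans (submxMl _ _) _; rewrite eq_row_base. Qed.

Lemma proj_id (S : 'M[R]_n) (w : 'rV[R]_n) : (w <= S)%MS -> w *m Defs.proj Q S = w.
Proof.
rewrite -(eq_row_base S) => /submxP [D ->].
rewrite /Defs.proj; have HG := gram_unit S.
move: HG; set B := row_base S; set G := B *m Q *m B^T => HG.
have -> : D *m B *m (Q *m B^T *m invmx G *m B) = D *m G *m invmx G *m B
  by rewrite /G !mulmxA.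
by rewrite -(mulmxA D) mulmxV // mulmx1.
Qed.

Lemma proj_orth (S T : 'M[R]_n) (w : 'rV[R]_n) :
  w *m Defs.proj Q S = 0 -> (T <= S)%MS -> w *m Defs.proj Q T = 0.
Proof.
rewrite /Defs.proj => H0 HTS; have HG := gram_unit S; have HG' := gram_unit T.
have HBf := row_base_free S.
have HBB : (row_base T <= row_base S)%MS by rewrite !eq_row_base.
move: HG HG' H0 HBf HBB; set B := row_base S; set B' := row_base T.
clearbody B B' => HG HG' H0 HBf HBB.
rewrite !mulmxA in H0 *.
move/eqP: H0; rewrite (mulmx_free_eq0 _ HBf) => /eqP H0.
have H1 : w *m Q *m B^T = 0.
  by rewrite -[LHS]mulmx1 -(mulVmx HG) mulmxA H0 mul0mx.
case/submxP: HBB => D ->.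
rewrite trmx_mul.
have -> : w *m Q *m (B^T *m D^T) = (w *m Q *m B^T) *m D^T by rewrite !mulmxA.
by rewrite H1 !mul0mx.
Qed.

End ProjFacts.

Lemma vvT_neq0 (R : realType) (n : nat) (v : 'rV[R]_n) : v != 0 -> (v *m v^T) 0 0 != 0.
Proof.
move=> Hv; apply: contra Hv => /eqP H; apply/eqP/rowP => l.
rewrite mxE in H.
have H0 : forall i : 'I_n, xpredT i -> 0 <= v 0 i * v^T i 0.
  by move=> i _; rewrite mxE -expr2 sqr_ge0.
have := psumr_eq0P H0 H (i:=l) isT.
rewrite mxE => /eqP; rewrite mulf_eq0 orbb => /eqP ->.
by rewrite mxE.
Qed.


Lemma cvg_sum_seq (R : realType) (V : normedModType R) (I : Type) (s : seq I)
  (u : I -> nat -> V) (l : I -> V) :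
  (forall i, u i @ \oo --> l i) ->
  (fun m => \sum_(i <- s) u i m) @ \oo --> \sum_(i <- s) l i.
Proof.
move=> Hu; elim: s => [|i s IH].
  rewrite big_nil; under eq_cvg do rewrite big_nil; exact: cvg_cst.
rewrite big_cons; under eq_cvg do rewrite big_cons.
exact: cvgD.
Qed.

Lemma cvg_coord (R : realType) (n : nat) (z : nat -> 'M[R]_n) (z0 : 'M[R]_n) i j :
  z @ \oo --> z0 -> (fun m => z m i j) @ \oo --> z0 i j.
Proof.
move=> Hz.
have H := cvg_comp _ _ Hz (@coord_continuous R n n i j z0).
exact: H.
Qed.

Lemma entry_sum (R : realType) (n : nat) (a : 'rV[R]_n) (z : 'M[R]_n) (b : 'cV[R]_n) :
  (a *m z *m b) 0 0 = \sum_l \sum_i (a 0 i * b l 0) * z i l.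
Proof.
rewrite mxE; apply: eq_bigr => l _; rewrite mxE mulr_suml; apply: eq_bigr => i _.
by rewrite mulrAC.
Qed.

Lemma cvg_bil (R : realType) (n : nat) (a : 'rV[R]_n) (b : 'cV[R]_n)
  (z : nat -> 'M[R]_n) (z0 : 'M[R]_n) :
  z @ \oo --> z0 -> (fun m => (a *m z m *m b) 0 0) @ \oo --> (a *m z0 *m b) 0 0.
Proof.
move=> Hz; under eq_cvg do rewrite entry_sum; rewrite entry_sum.
apply: cvg_sum_seq => l; apply: cvg_sum_seq => i.
apply: cvgMl_tmp; exact: cvg_coord.
Qed.

Section Core.
Variables (R : realType) (n r : nat) (chi : nat -> 'M[R]_n) (c : nat -> R)
  (w : nat -> 'rV[R]_n) (Bs : set 'M[R]_n).
Hypothesis Hc : forall i, (2 <= i <= r)%N -> c i != 0.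
Hypothesis Hw : forall j, (2 <= j <= r)%N -> w j != 0.
Hypothesis Hwc : forall i j, (2 <= i <= r)%N -> (2 <= j <= r)%N ->
  w j *m chi i = (if (j <= i)%N then c i else 0) *: w j.
Hypothesis Hx : forall x, Bs x -> forall j, (2 <= j <= r)%N -> w j *m x = 0.

Definition St (t : nat -> R) (j : nat) :=
  \sum_(2 <= i < r.+1) t i * (if (j <= i)%N then c i else 0).

Lemma wz (x : 'M[R]_n) (t : nat -> R) (k : R) j : Bs x -> (2 <= j <= r)%N ->
  w j *m ((1 - k) *: x + k *: \sum_(2 <= i < r.+1) t i *: chi i) =
  (k * St t j) *: w j.
Proof.
move=> Bx Hj.
rewrite mulmxDr -!scalemxAr Hx // scaler0 add0r mulmx_sumr.
rewrite /St mulr_sumr scaler_suml scaler_sumr.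
apply: eq_big_nat => i /andP [H1 H2].
rewrite -scalemxAr Hwc; last by [].
  by rewrite !scalerA mulrA.
by rewrite H1 -ltnS.
Qed.

Definition phi j (z : 'M[R]_n) :=
  (w j *m z *m (w j)^T) 0 0 / (w j *m (w j)^T) 0 0.
Definition phi' j z := if (j <= r)%N then phi j z else 0.
Definition Lf i z := (phi' i z - phi' i.+1 z) / c i.

Lemma phi_scale j z s : (2 <= j <= r)%N -> w j *m z = s *: w j -> phi j z = s.
Proof.
move=> Hj H; rewrite /phi H -scalemxAl mxE mulfK //.
exact/vvT_neq0/Hw.
Qed.

Lemma St_end t : St t r.+1 = 0.
Proof.
rewrite /St big_nat_cond big1 // => i /andP [/andP [_ Hi] _].
by rewrite leqNgt Hi mulr0.
Qed.

Lemma phi'_dec x t k j : Bs x -> (2 <= j <= r.+1)%N ->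
  phi' j ((1 - k) *: x + k *: \sum_(2 <= i < r.+1) t i *: chi i) = k * St t j.
Proof.
move=> Bx /andP [H1 H2]; rewrite /phi'.
case: leqP => Hjr.
  by apply: phi_scale; rewrite ?H1 ?Hjr //; apply: wz; rewrite ?H1 ?Hjr.
have -> : j = r.+1 by apply/eqP; rewrite eqn_leq H2 Hjr.
by rewrite St_end mulr0.
Qed.

Lemma St_diff t i : (2 <= i <= r)%N -> St t i - St t i.+1 = t i * c i.
Proof.
move=> /andP [H1 H2].
rewrite /St -sumrB (eq_bigr (fun l => if l == i then t i * c i else 0)).
  by rewrite -big_mkcond big_nat1_eq H1 ltnS H2.
move=> l _; case: eqP => [->|Hne]; first by rewrite leqnn ltnn mulr0 subr0.
have -> : (i.+1 <= l)%N = (i <= l)%N.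
  by rewrite ltn_neqAle; case: eqP => // E; case: Hne; rewrite E.
by rewrite subrr.
Qed.

Lemma Lf_dec x t k i : Bs x -> (2 <= i <= r)%N ->
  Lf i ((1 - k) *: x + k *: \sum_(2 <= l < r.+1) t l *: chi l) = k * t i.
Proof.
move=> Bx /andP [H1 H2]; rewrite /Lf !(@phi'_dec x t k _ Bx).
- by rewrite -mulrBr St_diff ?H1 // mulrA mulfK // Hc // H1.
- by rewrite ltnS (ltnW H1) ltnS H2.
- by rewrite H1 (leqW H2).
Qed.

Definition TS (y : 'M[R]_n) := exists t : nat -> R,
  [/\ forall i, 0 <= t i, \sum_(2 <= i < r.+1) t i = 1
    & y = \sum_(2 <= i < r.+1) t i *: chi i].
Definition Kf z := \sum_(2 <= i < r.+1) Lf i z.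
Definition Ef z := \sum_(2 <= i < r.+1) Lf i z *: chi i.

Lemma KE_dec x y k : Bs x -> TS y ->
  Kf ((1 - k) *: x + k *: y) = k /\ Ef ((1 - k) *: x + k *: y) = k *: y.
Proof.
move=> Bx [t [_ Ht ->]]; split.
  rewrite /Kf (eq_big_nat _ _ (F2 := fun i => k * t i)).
    by rewrite -mulr_sumr Ht mulr1.
  by move=> i Hi; apply: Lf_dec => //; rewrite -ltnS.
rewrite /Ef (eq_big_nat _ _ (F2 := fun i => (k * t i) *: chi i)).
  by rewrite scaler_sumr; apply: eq_bigr => i _; rewrite scalerA.
by move=> i Hi; rewrite Lf_dec // -ltnS.
Qed.

Lemma core_inj x x' y y' k k' : Bs x -> Bs x' -> TS y -> TS y' ->
  (1 - k) *: x + k *: y = (1 - k') *: x' + k' *: y' ->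
  [/\ k = k', k != 1 -> x = x' & k != 0 -> y = y'].
Proof.
move=> Bx Bx' Ty Ty' Hz.
have [K1 E1] := @KE_dec x y k Bx Ty; have [K2 E2] := @KE_dec x' y' k' Bx' Ty'.
rewrite Hz K2 in K1; rewrite Hz E2 in E1; subst k'.
split => // Hk.
  apply: (scalerI (a := 1 - k)); first by rewrite subr_eq0 eq_sym.
  by apply: (addIr (k *: y)); rewrite Hz E1.
by apply: (scalerI Hk).
Qed.

Lemma phi_cvg j (z : nat -> 'M[R]_n) z0 :
  z @ \oo --> z0 -> (fun m => phi j (z m)) @ \oo --> phi j z0.
Proof. by move=> Hz; apply: cvgMr_tmp; apply: cvg_bil. Qed.

Lemma phi'_cvg j (z : nat -> 'M[R]_n) z0 :
  z @ \oo --> z0 -> (fun m => phi' j (z m)) @ \oo --> phi' j z0.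
Proof.
move=> Hz; rewrite /phi'; case: leqP => _; first exact: phi_cvg.
exact: cvg_cst.
Qed.

Lemma Lf_cvg i (z : nat -> 'M[R]_n) z0 :
  z @ \oo --> z0 -> (fun m => Lf i (z m)) @ \oo --> Lf i z0.
Proof. by move=> Hz; apply: cvgMr_tmp; apply: cvgB; apply: phi'_cvg. Qed.

Lemma Kf_cvg (z : nat -> 'M[R]_n) z0 :
  z @ \oo --> z0 -> (fun m => Kf (z m)) @ \oo --> Kf z0.
Proof. by move=> Hz; apply: cvg_sum_seq => i; apply: Lf_cvg. Qed.

Lemma Ef_cvg (z : nat -> 'M[R]_n) z0 :
  z @ \oo --> z0 -> (fun m => Ef (z m)) @ \oo --> Ef z0.
Proof.
move=> Hz; apply: cvg_sum_seq => i; apply: cvgZr_tmp; exact: Lf_cvg.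
Qed.

Lemma core_cont (xs ys : nat -> 'M[R]_n) (ks : nat -> R) x y k :
  (forall m, [/\ Bs (xs m), TS (ys m) & 0 <= ks m <= 1]) ->
  Bs x -> TS y -> 0 <= k <= 1 ->
  (fun m => (1 - ks m) *: xs m + ks m *: ys m) @ \oo --> (1 - k) *: x + k *: y ->
  [/\ ks @ \oo --> k, k != 1 -> xs @ \oo --> x & k != 0 -> ys @ \oo --> y].
Proof.
move=> Hm Bx Ty _ Hz.
set zs := fun m => (1 - ks m) *: xs m + ks m *: ys m.
have [K0 E0] := @KE_dec x y k Bx Ty.
have HK m : Kf (zs m) = ks m.
  by have [B1 T1 _] := Hm m; have [-> _] := @KE_dec _ _ (ks m) B1 T1.
have HE m : Ef (zs m) = ks m *: ys m.
  by have [B1 T1 _] := Hm m; have [_ ->] := @KE_dec _ _ (ks m) B1 T1.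
have Hks : ks @ \oo --> k.
  have -> : ks = (fun m => Kf (zs m)) by apply: funext => m; rewrite HK.
  by rewrite -K0; apply: Kf_cvg.
have HEc : (fun m => Ef (zs m)) @ \oo --> k *: y by rewrite -E0; apply: Ef_cvg.
split => // Hk.
- have Hk1 : 1 - k != 0 by rewrite subr_eq0 eq_sym.
  have Hcv : (fun m => (1 - ks m)^-1 *: (zs m - Ef (zs m))) @ \oo -->
            (1 - k)^-1 *: ((1 - k) *: x + k *: y - k *: y).
    apply: cvgZ; last by apply: cvgB.
    by apply: cvgV => //; apply: cvgB => //; exact: cvg_cst.
  rewrite addrK scalerA mulVf // scale1r in Hcv.
  apply: cvg_trans Hcv; apply: near_eq_cvg.
  have H1 : (fun m => 1 - ks m) @ \oo --> 1 - k.
    by apply: cvgB => //; exact: cvg_cst.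
  near=> m.
  have Hm1 : 1 - ks m != 0 by near: m; exact: cvgr_neq0 H1 Hk1.
  by rewrite HE /zs addrK scalerA mulVf // scale1r.
- have Hcv : (fun m => (ks m)^-1 *: Ef (zs m)) @ \oo --> k^-1 *: (k *: y).
    by apply: cvgZ => //; apply: cvgV.
  rewrite scalerA mulVf // scale1r in Hcv.
  apply: cvg_trans Hcv; apply: near_eq_cvg.
  near=> m.
  have Hm1 : ks m != 0 by near: m; exact: cvgr_neq0 Hks Hk.
  by rewrite HE scalerA mulVf // scale1r.
Unshelve. all: by end_near.
Qed.

End Core.

Definition uvec (R : realType) (n : nat) (f : nat -> 'M[R]_n) j : 'rV[R]_n :=
  if [pick p : 'I_n | ~~ (row p (f j.-1) <= f j)%MS] is Some p
  then row p (f j.-1) else 0.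

Lemma uvec_spec (R : realType) (n : nat) (f : nat -> 'M[R]_n) j :
  (f j < f j.-1)%MS -> (uvec f j <= f j.-1)%MS /\ ~~ (uvec f j <= f j)%MS.
Proof.
rewrite /uvec; case: pickP => [p Hp | Hn] Hlt.
  by split => //; exact: row_sub.
exfalso; move: Hlt; rewrite ltmxE => /andP [_ /negP]; apply.
by apply/row_subP => p; have := Hn p => /negbFE.
Qed.

Definition wvec (R : realType) (n : nat) (Q : 'M[R]_n) (f : nat -> 'M[R]_n) j :=
  uvec f j - uvec f j *m Defs.proj Q (f j).

Lemma wvec_spec (R : realType) (n : nat) (Q : 'M[R]_n) (HQ : is_inner Q)
  (f : nat -> 'M[R]_n) j : (f j < f j.-1)%MS ->
  [/\ wvec Q f j != 0, (wvec Q f j <= f j.-1)%MS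
    & wvec Q f j *m Defs.proj Q (f j) = 0].
Proof.
move=> Hlt; have [Hu1 Hu2] := uvec_spec Hlt.
have HuP : (uvec f j *m Defs.proj Q (f j) <= f j)%MS.
  exact: submx_trans (submxMl _ _) (proj_sub _ _).
split.
- apply: contra Hu2 => /eqP H0.
  have -> : uvec f j = uvec f j *m Defs.proj Q (f j).
    by apply/eqP; rewrite -subr_eq0; apply/eqP.
  exact: HuP.
- rewrite /wvec addmx_sub // -mulNmx.
  exact: submx_trans (submxMl _ _) (submx_trans (proj_sub _ _) (ltmxW Hlt)).
- by rewrite /wvec mulmxBl (proj_id HQ HuP) subrr.
Qed.

Theorem lemma5p3 (R : realType) (n : nat) (Q : 'M[R]_n)
  (br : 'rV[R]_n -> 'rV[R]_n -> 'rV[R]_n) (h : 'M[R]_n) (A : set 'M[R]_n)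
  (r : nat) (f : nat -> 'M[R]_n) (isX : bool) :
  is_inner Q -> lie_bracket br -> ad_invariant Q br ->
  subalgebra br h -> (h < 1%:M)%MS -> aut_group Q br h A ->
  (1 < r)%N -> is_flag br h A r f -> g_not_in_flag r f ->
  (* injectivity of the join map: segments meet only at endpoints *)
  (forall (x x' y y' : 'M[R]_n) (k k' : R),
     Bset isX Q br A (f 1%N) x -> Bset isX Q br A (f 1%N) x' ->
     tail_simplex Q r f y -> tail_simplex Q r f y' ->
     0 <= k <= 1 -> 0 <= k' <= 1 ->
     (1 - k) *: x + k *: y = (1 - k') *: x' + k' *: y' ->
     [/\ k = k', k != 1 -> x = x' & k != 0 -> y = y'])
  /\
  (* continuity of the inverse map B[phi] -> join *)
  (forall (xs ys : nat -> 'M[R]_n) (ks : nat -> R) (x y : 'M[R]_n) (k : R),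
     (forall m, [/\ Bset isX Q br A (f 1%N) (xs m), tail_simplex Q r f (ys m)
                  & 0 <= ks m <= 1]) ->
     Bset isX Q br A (f 1%N) x -> tail_simplex Q r f y -> 0 <= k <= 1 ->
     (fun m => (1 - ks m) *: xs m + ks m *: ys m) @ \oo
        --> (1 - k) *: x + k *: y ->
     [/\ ks @ \oo --> k, k != 1 -> xs @ \oo --> x & k != 0 -> ys @ \oo --> y]).
Proof.
move=> HQ _ _ _ _ _ Hr [_ [_ Hfl]] Hg.
pose c := fun i => ((n - \rank (f i))%:R)^-1 : R.
pose chi := fun i => chibar Q (f i).
pose w := wvec Q f.
pose Bs := Bset isX Q br A (f 1%N).
have fle : forall i j, (1 <= i)%N -> (i <= j)%N -> (j <= r)%N -> (f j <= f i)%MS.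
  move=> i j H1 H2 H3; rewrite leq_eqVlt in H2; case/orP: H2 => [/eqP -> | H2].
    exact: submx_refl.
  exact: ltmxW (Hfl _ _ H1 H2 H3).
have Hlt : forall j, (2 <= j <= r)%N -> (f j < f j.-1)%MS.
  move=> j /andP [H1 H2]; apply: Hfl => //.
    by case: j H1 H2 => [|[|j]].
  by rewrite ltn_predL ltnW.
have Hc : forall i, (2 <= i <= r)%N -> c i != 0.
  move=> i /andP [H1 H2]; rewrite /c invr_eq0 pnatr_eq0 subn_eq0 -ltnNge.
  have := Hg i; rewrite (ltnW H1) H2 => /(_ isT).
  by rewrite ltmxErank mxrank1 => /andP [_ ->].
have Hw : forall j, (2 <= j <= r)%N -> w j != 0.
  by move=> j Hj; have [] := wvec_spec HQ (Hlt j Hj).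
have Hwc : forall i j, (2 <= i <= r)%N -> (2 <= j <= r)%N ->
    w j *m chi i = (if (j <= i)%N then c i else 0) *: w j.
  move=> i j Hi Hj; have [_ Hw1 Hw2] := wvec_spec HQ (Hlt j Hj).
  move: Hi Hj => /andP [Hi1 Hi2] /andP [Hj1 Hj2].
  rewrite /chi /chibar -scalemxAr mulmxBr mulmx1.
  case: leqP => Hji.
    have -> : w j *m Defs.proj Q (f i) = 0.
      apply: (proj_orth HQ Hw2); apply: fle => //; exact: ltnW.
    by rewrite subr0.
  have -> : w j *m Defs.proj Q (f i) = w j.
    apply: (proj_id HQ); apply: submx_trans Hw1 _; apply: fle => //.
    - exact: ltnW.
    - by rewrite -ltnS (ltn_predK Hji).
    - by apply: leq_trans (leq_pred j) Hj2.
  by rewrite subrr scaler0 scale0r.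
have Hx : forall x, Bs x -> forall j, (2 <= j <= r)%N -> w j *m x = 0.
  move=> x Bx j Hj.
  have Hann : forall v : 'rV[R]_n, (v <= f 1%N)%MS -> v *m x = 0.
    move: Bx; rewrite /Bs /Bset /=; case: ifP => _.
      by move=> [[_ [_ [_ [_ [H _]]]]] _].
    by move=> [_ [_ [_ [_ [H _]]]]].
  have [_ Hw1 _] := wvec_spec HQ (Hlt j Hj).
  apply: Hann; apply: submx_trans Hw1 _; move: Hj => /andP [Hj1 Hj2]; apply: fle.
  - by [].
  - by case: j Hj1 {Hj2} => [|[|j]].
  - by apply: leq_trans (leq_pred j) Hj2.
split.
- move=> x x' y y' k k' Bx Bx' Ty Ty' _ _ Hz.
  exact: (@core_inj R n r chi c w Bs Hc Hw Hwc Hx _ _ _ _ _ _ Bx Bx' Ty Ty' Hz).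
- move=> xs ys ks x y k Hm Bx Ty Hk Hz.
  exact: (@core_cont R n r chi c w Bs Hc Hw Hwc Hx _ _ _ _ _ _ Hm Bx Ty Hk Hz).
Qed.
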